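(* Let $(X,\tau)$ be a Hausdorff extended locally convex space. Then: (i) if $A\subseteq X$ is absolutely convex and bounded in $(X,\tau)$, then $A\subseteq X_{fin}$; (ii) if $U$ is an absolutely convex neighborhood of $0_X$ in $(X,\tau)$ that is bounded in $(X,\tau)$, then the Minkowski functional $\rho_U$ is a $\tau$-continuous extended norm on $X$, and $X_{fin}=\{x\in X:\rho_U(x)<\infty\}$.
   Context: An extended seminorm on a vector space $X$ over $\mathbb{R}$ or $\mathbb{C}$ is a map $\rho:X\to[0,\infty]$ with $\rho(\alpha x)=|\alpha|\rho(x)$ and $\rho(x+y)\le\rho(x)+\rho(y)$; it is an extended norm if moreover $\rho(x)=0$ only for $x=0_X$. An extended locally convex space $(X,\tau)$ is a vector space with the topology induced by a family $\{\rho_i\}$ of extended seminorms (neighborhood base at $x_0$: $\{x:\max_{i\in J}\rho_i(x-x_0)<\varepsilon\}$, $J$ finite, $\varepsilon>0$). $X_{fin}=\{x\in X:\rho(x)<\infty$ for every $\tau$-continuous extended seminorm $\rho\}$, equivalently the intersection of all $\tau$-open linear subspaces. A set $A\subseteq X$ is bounded in $(X,\tau)$ if for every neighborhood $U$ of $0_X$ there exist $c>0$ and a finite set $P\subseteq A$ with $A\subseteq P+cU$. For absolutely convex $U$, $\rho_U(x)=\inf\{\lambda>0:x\in\lambda U\}$ ($\inf\emptyset=\infty$). *)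

(* Defs.v *)
From HB Require Import structures.
From mathcomp Require Import all_boot all_order all_algebra.
From mathcomp Require Import all_classical all_reals all_analysis.
From mathcomp Require Import complex.
Set Implicit Arguments. Unset Strict Implicit. Unset Printing Implicit Defensive.
Import Order.TTheory GRing.Theory Num.Theory.
Local Open Scope classical_set_scope.
Local Open Scope ring_scope.

(* The scalar field K is R or C (= R[i]).  [absK] is the modulus |.| : K -> R
   and [inK] the canonical embedding R -> K (used for positive real scalars). *)
Inductive RorC (R : realType) : forall K : numFieldType, (K -> R) -> (R -> K) -> Prop :=
  | RorC_R : @RorC R R (fun a : R => `|a|) (fun r : R => r)
  | RorC_C : @RorC R (complex R) (@Normc.normc R) (fun r : R => (r%:C)%C).

Section ELCS.
Variables (R : realType) (K : numFieldType) (absK : K -> R) (inK : R -> K).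
Variable (X : lmodType K).

Definition ext_seminorm (rho : X -> \bar R) : Prop :=
  [/\ (forall x : X, (0 <= rho x)%E),
      (forall (a : K) (x : X), rho (a *: x) = ((absK a)%:E * rho x)%E) &
      (forall x y : X, (rho (x + y)%R <= rho x + rho y)%E)].

Definition ext_norm (rho : X -> \bar R) : Prop :=
  ext_seminorm rho /\ (forall x, rho x = 0%E -> x = 0).

Variables (I : Type) (P : I -> X -> \bar R).

Definition tau_ball (J : seq I) (x0 : X) (eps : R) : set X :=
  [set x | (\big[maxe/0%E]_(i <- J) P i (x - x0) < eps%:E)%E].

Definition tau_nbhs (x0 : X) (N : set X) : Prop :=
  exists (J : seq I) (eps : R), 0 < eps /\ tau_ball J x0 eps `<=` N.

Definition tau_open (S : set X) : Prop := forall x, S x -> tau_nbhs x S.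

Definition tau_hausdorff : Prop :=
  forall x y : X, x <> y ->
    exists U V, [/\ tau_nbhs x U, tau_nbhs y V & U `&` V = set0].

Definition tau_continuous (rho : X -> \bar R) : Prop :=
  forall x0 (N : set (\bar R)), nbhs (rho x0) N -> tau_nbhs x0 (rho @^-1` N).

Definition X_fin : set X :=
  [set x | forall rho, ext_seminorm rho -> tau_continuous rho -> (rho x < +oo)%E].

Definition absolutely_convex (A : set X) : Prop :=
  forall x y (a b : K), A x -> A y -> absK a + absK b <= 1 -> A (a *: x + b *: y).

Definition tau_bounded (A : set X) : Prop :=
  forall U, tau_nbhs 0 U ->
    exists (c : R) (F : seq X), [/\ 0 < c, (forall p, p \in F -> A p) &
      A `<=` [set z | exists p u, [/\ p \in F, U u & z = p + inK c *: u]]].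

(* Minkowski functional rho_U(x) = inf {l > 0 : x \in l U}, inf set0 = +oo *)
Definition minkowski_fun (U : set X) (x : X) : \bar R :=
  ereal_inf [set l%:E | l in [set l : R | 0 < l /\ exists2 u, U u & x = inK l *: u]].

End ELCS.

(* Main.v *)
Require Import Defs.
From HB Require Import structures.
From mathcomp Require Import all_boot all_order all_algebra.
From mathcomp Require Import all_classical all_reals all_analysis.
From mathcomp Require Import complex.
From mathcomp Require Import ring lra.
Import Order.TTheory GRing.Theory Num.Theory.
Import numFieldNormedType.Exports.
Local Open Scope classical_set_scope.
Local Open Scope ring_scope.

Lemma RorC_props {R : realType} {K : numFieldType} {absK : K -> R} {inK : R -> K}
  (h : RorC absK inK) :
  [/\ (forall a, 0 <= absK a), (forall a b, absK (a * b) = absK a * absK b),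
      (forall a, absK a = 0 -> a = 0), (forall r, absK (inK r) = `|r|) &
      [/\ (forall r s, inK (r * s) = inK r * inK s),
          (forall r s, inK (r - s) = inK r - inK s) & inK 1 = 1]].
Proof.
case: h.
- split => //; [exact: normrM| by move=> a /eqP; rewrite normr_eq0 => /eqP].
- split.
  + by case=> x y; rewrite /Normc.normc sqrtr_ge0.
  + exact: Normc.normcM.
  + exact: Normc.eq0_normc.
  + by move=> r; rewrite /Normc.normc /= expr0n /= addr0 sqrtr_sqr.
  + split.
    * by move=> r s; rewrite (rmorphM (real_complex R)).
    * by move=> r s; rewrite (rmorphB (real_complex R)).
    * by rewrite (rmorph1 (real_complex R)).
Qed.

Lemma nbhs_fin_ball (R : realType) (r : R) (N : set (\bar R)) :
  nbhs r%:E N -> exists2 d : R, 0 < d & forall y, `|r - y| < d -> N y%:E.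
Proof.
move=> /= h. have : nbhs r (fun y => N y%:E) by exact h.
move/nbhs_ballP => [d d0 hd]; exists d => // y hy; exact: hd.
Qed.

Section S.
Variables (R : realType) (K : numFieldType) (absK : K -> R) (inK : R -> K).
Hypothesis hK : RorC absK inK.

Lemma absK_ge0 a : 0 <= absK a. Proof. by case: (RorC_props hK) => h _ _ _ _; apply: h. Qed.
Lemma absKM a b : absK (a * b) = absK a * absK b. Proof. by case: (RorC_props hK) => _ h _ _ _; apply: h. Qed.
Lemma absK_eq0 a : absK a = 0 -> a = 0. Proof. by case: (RorC_props hK) => _ _ h _ _; apply: h. Qed.
Lemma absK_inK r : absK (inK r) = `|r|. Proof. by case: (RorC_props hK) => _ _ _ h _; apply: h. Qed.
Lemma inKM r s : inK (r * s) = inK r * inK s. Proof. by case: (RorC_props hK) => _ _ _ _ [h _ _]; apply: h. Qed.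
Lemma inKB r s : inK (r - s) = inK r - inK s. Proof. by case: (RorC_props hK) => _ _ _ _ [_ h _]; apply: h. Qed.
Lemma inK1 : inK 1 = 1. Proof. by case: (RorC_props hK) => _ _ _ _ [_ _ h]. Qed.
Lemma inK0 : inK 0 = 0. Proof. by rewrite -(subrr 1) inKB subrr. Qed.
Lemma absK0 : absK 0 = 0. Proof. by rewrite -inK0 absK_inK normr0. Qed.
Lemma absKN1 : absK (-1) = 1.
Proof. by rewrite -[-1]sub0r -inK1 -inK0 -inKB absK_inK sub0r normrN normr1. Qed.
Lemma absK_inKp {r} : 0 <= r -> absK (inK r) = r.
Proof. by move=> h; rewrite absK_inK ger0_norm. Qed.
Lemma absK_gt0 a : a != 0 -> 0 < absK a.
Proof.
move=> h; rewrite lt_def absK_ge0 andbT; apply/eqP => /absK_eq0 h0.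
by rewrite h0 eqxx in h.
Qed.
Lemma absK1 : absK 1 = 1. Proof. by rewrite -inK1 absK_inK normr1. Qed.
Lemma absKV a : a != 0 -> absK a^-1 = (absK a)^-1.
Proof.
move=> ha; have h0 : absK a != 0 by rewrite gt_eqF ?absK_gt0.
by apply: (mulfI h0); rewrite -absKM !mulfV // absK1.
Qed.
Lemma inK_neq0 r : r != 0 -> inK r != 0.
Proof.
move=> h; apply/eqP => h0; have := absK_inK r; rewrite h0 absK0 => /esym/eqP.
by rewrite normr_eq0 (negbTE h).
Qed.

Variable (X : lmodType K).

Lemma sn0 rho : ext_seminorm absK rho -> rho (0 : X) = 0%E.
Proof. by case=> _ hZ _; rewrite -(scale0r (0 : X)) hZ absK0 mul0e. Qed.
Lemma snN rho (x : X) : ext_seminorm absK rho -> rho (- x) = rho x.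
Proof. by case=> _ hZ _; rewrite -scaleN1r hZ absKN1 mul1e. Qed.
Lemma snB rho (x y : X) : ext_seminorm absK rho -> rho (x - y) = rho (y - x).
Proof. by move=> h; rewrite -opprB snN. Qed.
Lemma snZp rho c (x : X) : ext_seminorm absK rho -> 0 <= c ->
  rho (inK c *: x) = (c%:E * rho x)%E.
Proof. by case=> _ hZ _ hc; rewrite hZ absK_inKp. Qed.

Lemma ball_lt (I : Type) (F : I -> \bar R) (J : seq I) (e : R) :
  (\big[maxe/0%E]_(i <- J) F i < e%:E)%E <-> (0 < e /\ forall i, List.In i J -> (F i < e%:E)%E).
Proof.
elim: J => [|j J IH]; rewrite ?big_nil ?big_cons.
  by rewrite lte_fin; split => [h|[h _]] //; split.
rewrite gt_max; split => [/andP[h1 /IH [h2 h3]]|[h2 h3]].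
  by split => // i [<-|/h3].
apply/andP; split; first by apply: h3; left.
by apply/IH; split => // i hi; apply: h3; right.
Qed.

Lemma ac_scale (A : set X) t u : absolutely_convex absK A -> absK t <= 1 -> A u -> A (t *: u).
Proof.
move=> hA ht hu; have := hA u u t 0 hu hu; rewrite absK0 addr0 scale0r addr0; exact.
Qed.

Lemma key (rho : X -> \bar R) (A : set X) (F : seq X) (c : R) (y : X) :
  ext_seminorm absK rho -> 0 < c ->
  (forall z, A z -> exists2 p, p \in F & (rho (z - p)%R < c%:E)%E) ->
  (forall t, 0 <= t -> t <= 1 -> A (inK t *: y)) ->
  (rho y < ((c + c) * (size F).+1%:R)%:E)%E.
Proof.
move=> hs hc hcov hA.
have hD := let: And3 _ _ h := hs in h.
set n := size F; set N : R := n.+1%:R.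
have hN : 0 < N by rewrite ltr0n.
pose t (k : nat) : R := k%:R / N.
have ht k : (k <= n)%N -> 0 <= t k /\ t k <= 1.
  move=> hk; split; first by rewrite divr_ge0 ?ler0n // ltW.
  by rewrite ler_pdivrMr // mul1r ler_nat leqW.
have : forall k, exists p : X, (k <= n)%N -> p \in F /\ (rho (inK (t k) *: y - p)%R < c%:E)%E.
  move=> k; case: (leqP k n) => hk.
  - have [a b] := ht k hk; have [p hp1 hp2] := hcov _ (hA _ a b).
    by exists p.
  - by exists 0.
case/choice => g hg.
pose s := map g (iota 0 n.+1).
have : ~~ uniq s.
  apply/negP => hu.
  have hsub : {subset s <= F}.
    move=> q /mapP [k]; rewrite mem_iota add0n => /andP [_ hk] ->.
    by case: (hg k _).
  by have := uniq_leq_size hu hsub; rewrite size_map size_iota ltnn.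
move/(uniqPn 0) => [i [j [hij hj heq]]].
rewrite size_map size_iota in hj.
have hi : (i < n.+1)%N := ltn_trans hij hj.
have hi' : (i < size (iota 0 n.+1))%N by rewrite size_iota.
have hj' : (j < size (iota 0 n.+1))%N by rewrite size_iota.
rewrite (nth_map 0%N (0 : X) g hi') (nth_map 0%N (0 : X) g hj') !nth_iota // !add0n in heq.
have [_ hi2] := hg i (hi : (i <= n)%N).
have [_ hj2] := hg j (hj : (j <= n)%N).
have hlt : (rho (inK (t j) *: y - inK (t i) *: y)%R < (c + c)%:E)%E.
  have := hD (inK (t j) *: y - g j) (g j - inK (t i) *: y).
  rewrite addrA subrK => h; apply: (le_lt_trans h).
  by rewrite EFinD lteD // -heq (snB _ _ _ hs).
have hD1 : 1 <= j%:R - i%:R :> R.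
  have : (i.+1)%:R <= j%:R :> R by rewrite ler_nat.
  rewrite -addn1 natrD; lra.
have htij : t j - t i = (j%:R - i%:R) / N by rewrite /t mulrBl.
have htpos : 0 < t j - t i by rewrite htij divr_gt0 //; lra.
move: hlt; rewrite -scalerBl -inKB (snZp _ _ _ hs) ?ltW //.
case: (rho y) (let: And3 h _ _ := hs in h y) => [r| |] //.
- rewrite -EFinM !lte_fin htij lee_fin => hr0 hlt.
  have : (j%:R - i%:R) * r < (c + c) * N.
    by rewrite -ltr_pdivrMr // mulrAC.
  nra.
- by move=> _; rewrite gt0_muley ?lte_fin // ltNge leey.
Qed.

Lemma part1 (I : Type) (P : I -> X -> \bar R) (A : set X) :
  absolutely_convex absK A -> tau_bounded inK P A -> A `<=` X_fin absK P.
Proof.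
move=> hA hB x hx rho hs hc.
have hV : tau_nbhs P 0 [set z | (rho z < 1%:E)%E].
  have := hc 0 [set y | (y < 1%:E)%E]; rewrite (sn0 _ hs); apply.
  exact: (@nbhs_open_ereal_lt R 0 (fun=> 1) ltr01).
have [c [F [hc0 hF hcov]]] := hB _ hV.
apply: (lt_trans (@key rho A F c x hs hc0 _ _) (ltry _)).
- move=> z /hcov [p [u [hp hu ->]]]; exists p => //.
  rewrite addrC addKr (snZp _ _ _ hs) ?ltW //.
  have hge : (0 <= rho u)%E by case: hs.
  move: hu; rewrite /=; case: (rho u) hge => [q| |] //.
  by rewrite -EFinM !lte_fin lee_fin => h1 h2; nra.
- by move=> t ht0 ht1; apply: ac_scale => //; rewrite absK_inKp.
Qed.

Section Mk.
Variable (U : set X).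
Hypothesis hU : absolutely_convex absK U.
Hypothesis hU0 : U 0.
Local Notation mk := (minkowski_fun inK U).

Lemma mk_lb (x : X) l u : 0 < l -> U u -> x = inK l *: u -> (mk x <= l%:E)%E.
Proof. by move=> hl hu hx; apply: ereal_inf_lbound; exists l => //; split => //; exists u. Qed.

Lemma mk_lt (x : X) (y : \bar R) : (mk x < y)%E ->
  exists l u, [/\ 0 < l, U u, x = inK l *: u & (l%:E < y)%E].
Proof. by move/ereal_inf_lt => [_ [l [hl [u hu hx]] <-] hy]; exists l, u. Qed.

Lemma mk_ge0 (x : X) : (0 <= mk x)%E.
Proof. by apply/ereal_infP => _ [l [hl _] <-]; rewrite lee_fin ltW. Qed.

Lemma mk0 : mk 0 = 0%E.
Proof.
apply/eqP; rewrite eq_le mk_ge0 andbT; apply/lee_addgt0Pr => e he.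
have := @mk_lb 0 e 0 he hU0 (esym (scaler0 _ (inK e))).
by rewrite add0e.
Qed.

Lemma mk_le_of (x y : X) (c : R) : 0 < c ->
  (forall l u, 0 < l -> U u -> x = inK l *: u -> (mk y <= (c * l)%:E)%E) ->
  (mk y <= c%:E * mk x)%E.
Proof.
move=> hc h; case E: (mk x) => [r| |].
- apply/lee_addgt0Pr => e he.
  have : (mk x < (r + e / c)%:E)%E by rewrite E lte_fin ltrDl divr_gt0.
  move/mk_lt => [l [u [hl hu hx]]]; rewrite lte_fin => hlt.
  apply: (le_trans (h _ _ hl hu hx)); rewrite -EFinM -EFinD lee_fin.
  have : c * l < c * (r + e / c) by rewrite ltr_pM2l.
  rewrite mulrDr mulrCA divff ?mulr1; [exact: ltW| exact: lt0r_neq0].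
- by rewrite gt0_muley ?lte_fin // leey.
- by have := mk_ge0 x; rewrite E.
Qed.

Lemma mk_seminorm : ext_seminorm absK mk.
Proof.
have homo a (x : X) : a != 0 -> (mk (a *: x) <= (absK a)%:E * mk x)%E.
  move=> ha; apply: mk_le_of; first exact: absK_gt0.
  move=> l u hl hu ->.
  have hA : inK (absK a) != 0 by apply: inK_neq0; rewrite gt_eqF ?absK_gt0.
  apply: (@mk_lb _ _ ((a / inK (absK a)) *: u)).
  - by rewrite mulr_gt0 ?absK_gt0.
  - apply: ac_scale => //; rewrite absKM.
    rewrite absKV // absK_inKp ?absK_ge0 //.
    by rewrite mulfV ?gt_eqF ?absK_gt0.
  - rewrite !scalerA inKM; congr (_ *: _); field; exact: hA.
split.
- exact: mk_ge0.
- move=> a x; have [->|ha] := eqVneq a 0.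
    by rewrite scale0r absK0 mul0e mk0.
  apply/eqP; rewrite eq_le homo //=.
  have hap := @absK_gt0 a ha.
  have := homo a^-1 (a *: x); rewrite invr_eq0 => /(_ ha).
  rewrite scalerA mulVf // scale1r => h.
  rewrite -(@lee_pmul2l _ (absK a)^-1%:E) ?lte_fin ?invr_gt0 //.
  by rewrite muleA -EFinM mulVf ?gt_eqF // mul1e -absKV.
- move=> x y.
  have ny : mk y != -oo%E by move: (mk_ge0 y); case: (mk y).
  have nx : mk x != -oo%E by move: (mk_ge0 x); case: (mk x).
  case Ex: (mk x) => [r| |]; last by rewrite Ex in nx.
    2: by rewrite addye ?leey // -Ex.
  case Ey: (mk y) => [s| |]; last by rewrite Ey in ny.
    2: by rewrite addey ?leey.
  apply/lee_addgt0Pr => e he.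
  have : (mk x < (r + e / 2)%:E)%E by rewrite Ex lte_fin ltrDl divr_gt0.
  move/mk_lt => [l [u [hl hu hx]]]; rewrite lte_fin => hlr.
  have : (mk y < (s + e / 2)%:E)%E by rewrite Ey lte_fin ltrDl divr_gt0.
  move/mk_lt => [m [v [hm hv hy]]]; rewrite lte_fin => hms.
  have hlm : 0 < l + m by rewrite addr_gt0.
  apply: (le_trans (@mk_lb (x + y) (l + m) (inK (l / (l + m)) *: u + inK (m / (l + m)) *: v) hlm _ _)).
  + have h1 : 0 <= l / (l + m) by rewrite divr_ge0 // ltW.
    have h2 : 0 <= m / (l + m) by rewrite divr_ge0 // ltW.
    apply: hU => //; rewrite (absK_inKp h1) (absK_inKp h2).
    by rewrite -mulrDl divff // lt0r_neq0.
  + rewrite hx hy scalerDr !scalerA -!inKM; congr (inK _ *: _ + inK _ *: _); field; exact: lt0r_neq0.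
  + rewrite -!EFinD lee_fin; lra.
Qed.
Variables (I : Type) (P : I -> X -> \bar R).
Hypothesis hP : forall i, ext_seminorm absK (P i).

Lemma mk_ball J eps z l : 0 < l -> 0 < eps -> tau_ball P J 0 eps `<=` U ->
  (\big[maxe/0%E]_(i <- J) P i z < (l * eps)%:E)%E -> (mk z <= l%:E)%E.
Proof.
move=> hl he hB hz.
have [_ hz'] := (ball_lt _ (fun i => P i z) J _).1 hz.
apply: (@mk_lb z l (inK l^-1 *: z) hl).
- apply: hB; rewrite /tau_ball /=; apply/ball_lt; split => // i hi.
  rewrite subr0 (snZp _ _ _ (hP i)); last by rewrite invr_ge0 ltW.
  have hge : (0 <= P i z)%E by case: (hP i).
  have := hz' i hi; case: (P i z) hge => [p| |] //.
  rewrite -EFinM !lte_fin => _ hp.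
  by rewrite mulrC ltr_pdivrMr // mulrC.
- by rewrite scalerA -inKM mulfV ?gt_eqF // inK1 scale1r.
Qed.

Lemma mk_cont : tau_nbhs P 0 U -> tau_continuous P mk.
Proof.
move=> [J [eps [he hB]]] x0 N hN.
have hs := mk_seminorm; case: (hs) => _ _ hD.
have near x d : 0 < d -> tau_ball P J x0 (d * eps) x -> (mk (x - x0) <= d%:E)%E.
  by move=> hd hx; exact: (@mk_ball J eps (x - x0) d hd he hB hx).
have up x : (mk x <= mk x0 + mk (x - x0))%E.
  by have := hD x0 (x - x0); rewrite [x0 + _]addrC subrK.
have dn x : (mk x0 <= mk x + mk (x - x0))%E.
  by have := hD x (x0 - x); rewrite [x + _]addrC subrK (snB _ _ _ hs).
case E: (mk x0) hN => [r| |] hN.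
- have [d hd hdN] := nbhs_fin_ball _ _ _ hN.
  exists J, (d / 2 * eps); split; first by rewrite mulr_gt0 ?divr_gt0.
  move=> x hx; have h1 := near x (d / 2) (divr_gt0 hd (ltr0Sn _ 1)) hx.
  rewrite /preimage /=; have := up x; have := dn x; rewrite E.
  case: (mk (x - x0)) h1 (mk_ge0 (x - x0)) => [q| |] // hq _.
  rewrite lee_fin in hq.
  case: (mk x) (mk_ge0 x) => [s| |] //.
  move=> _; rewrite -!EFinD !lee_fin => h2 h3; apply: hdN.
  by rewrite ltr_norml; apply/andP; split; lra.
- exists J, (1 * eps); split; first by rewrite mul1r.
  move=> x hx; have h1 := near x 1 ltr01 hx.
  rewrite /preimage /=; have := dn x; rewrite E.
  case: (mk (x - x0)) h1 (mk_ge0 (x - x0)) => [q| |] // hq _.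
  case: (mk x) (mk_ge0 x) => [s| |] //.
  by move=> _ _; exact: nbhs_singleton hN.
- by have := mk_ge0 x0; rewrite E.
Qed.

Lemma mk_norm : tau_hausdorff P -> tau_bounded inK P U -> forall x, mk x = 0%E -> x = 0.
Proof.
move=> hT hB x hx0; apply: contrapT => hx.
have [U1 [V1 [[J1 [e1 [he1 hB1]]] [J2 [e2 [he2 hB2]]] hUV]]] := hT x 0 hx.
have [i hi] : exists i, P i x != 0%E.
  apply: contrapT => hn.
  have hz j : P j x = 0%E.
    by apply/eqP; apply: contrapT => h; apply: hn; exists j; apply/negP.
  have : (U1 `&` V1) 0.
    split; [apply: hB1 | apply: hB2]; rewrite /tau_ball /=; apply/ball_lt; split => // j _.
    - by rewrite sub0r (snN _ _ (hP j)) hz lte_fin.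
    - by rewrite subr0 (sn0 _ (hP j)) lte_fin.
  by rewrite hUV.
have hsc s : 0 <= s -> U (inK s *: x).
  move=> hs0; have [->|hs] := eqVneq s 0; first by rewrite inK0 scale0r.
  have hsp : 0 < s by rewrite lt_def hs.
  have : (mk x < (s^-1)%:E)%E by rewrite hx0 lte_fin invr_gt0.
  move/mk_lt => [l [u [hl hu -> hls]]].
  rewrite scalerA -inKM; apply: ac_scale => //; rewrite absK_inKp ?mulr_ge0 ?ltW //.
  rewrite lte_fin in hls.
  have : s * l < s * s^-1 by rewrite ltr_pM2l.
  by rewrite mulfV ?gt_eqF // => /ltW.
have hV : tau_nbhs P 0 (tau_ball P [:: i] 0 1) by exists [:: i], 1; split.
have [c [F [hc hF hcov]]] := hB _ hV.
have hcov' : forall z, U z -> exists2 p, p \in F & (P i (z - p)%R < c%:E)%E.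
  move=> z /hcov [p [u [hp hu ->]]]; exists p => //.
  rewrite addrC addKr (snZp _ _ _ (hP i)) ?ltW //.
  have [_ hu'] := (ball_lt _ (fun j => P j (u - 0)) [:: i] 1).1 hu.
  have := hu' i (or_introl erefl).
  have hge : (0 <= P i u)%E by case: (hP i).
  rewrite subr0; case: (P i u) hge => [q| |] //.
  by rewrite -EFinM !lte_fin lee_fin => h1 h2; nra.
set B := (c + c) * (size F).+1%:R.
have hBp : 0 < B by rewrite mulr_gt0 ?addr_gt0 ?ltr0n.
have hT' T : 0 < T -> (P i (inK T *: x) < B%:E)%E.
  move=> hT0; apply: (@key (P i) U F c _ (hP i) hc hcov').
  move=> t ht0 ht1; rewrite scalerA -inKM; apply: hsc; apply: mulr_ge0 => //; exact: ltW.
have hge : (0 <= P i x)%E by case: (hP i).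
move: hi hge; case E: (P i x) => [q| |] // hq0' hq0.
- have hq : 0 < q.
    rewrite lt_def; rewrite lee_fin in hq0; rewrite hq0 andbT.
    by apply: contra hq0' => /eqP ->.
  have := hT' (B / q) (divr_gt0 hBp hq).
  rewrite (snZp _ _ _ (hP i)) ?ltW ?divr_gt0 // E -EFinM lte_fin divfK ?gt_eqF //.
  by rewrite ltxx.
- have := hT' 1 ltr01.
  by rewrite (snZp _ _ _ (hP i)) ?ler01 // E mul1e ltNge leey.
Qed.

Lemma part2 : tau_nbhs P 0 U -> tau_hausdorff P -> tau_bounded inK P U ->
  [/\ ext_norm absK mk, tau_continuous P mk & X_fin absK P = [set x | (mk x < +oo)%E]].
Proof.
move=> hN hT hB; split.
- split; [exact: mk_seminorm | exact: mk_norm].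
- exact: mk_cont.
- apply/seteqP; split => x.
  + by move=> hx; exact: (hx _ mk_seminorm (mk_cont hN)).
  + move=> /mk_lt [l [u [hl hu -> _]]] rho hs hc.
    have := @part1 I P U hU hB u hu rho hs hc.
    have hge : (0 <= rho u)%E by case: hs.
    rewrite (snZp _ _ _ hs) ?ltW //; move: hge; case: (rho u) => [q| |] // _ _.
    by rewrite -EFinM ltry.
Qed.

End Mk.

End S.

Theorem proposition5p6 (R : realType) (K : numFieldType) (absK : K -> R)
  (inK : R -> K) (hK : RorC absK inK) (X : lmodType K)
  (I : Type) (P : I -> X -> \bar R)
  (hP : forall i, ext_seminorm absK (P i))
  (hT2 : tau_hausdorff P) :
  (forall A : set X, absolutely_convex absK A -> tau_bounded inK P A ->
     A `<=` X_fin absK P) /\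
  (forall U : set X, absolutely_convex absK U -> tau_nbhs P 0 U ->
     tau_bounded inK P U ->
     [/\ ext_norm absK (minkowski_fun inK U), tau_continuous P (minkowski_fun inK U) &
         X_fin absK P = [set x | (minkowski_fun inK U x < +oo)%E]]).
Proof.
split.
- by move=> A hA hB; exact: (@part1 R K absK inK hK X I P A hA hB).
- move=> U hU hN hB.
  have hU0 : U 0.
    case: hN => [J [eps [he hBall]]]; apply: hBall; rewrite /tau_ball /=.
    apply/ball_lt; split => // i _.
    by rewrite subr0 (@sn0 R K absK inK hK X _ (hP i)) lte_fin.
  exact: (@part2 R K absK inK hK X U hU hU0 I P hP hN hT2 hB).
Qed.
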